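(* Suppose $\xi_r(\varpi^N)<1/2$ for some $r\in\{0,\ldots,N\}$. Then for every $\hat A\in\arg\min_{A\in\mathbb{R}^{n\times s}}\mathcal{J}(A)$ and every $A\in\mathbb{R}^{n\times s}$, $$\|\phi(A)-\phi(\hat A)\|_1\le\frac{2}{1-2\xi_r(\varpi^N)}\,\delta_r(A).$$ Moreover, if there exists $\tilde A\in\mathbb{R}^{n\times s}$ with $\|\phi(\tilde A)\|_0\le r$, then $$\arg\min_{A}\mathcal{J}(A)=\{A\in\mathbb{R}^{n\times s}:\|\phi(A)\|_0\le r\}=\{A\in\mathbb{R}^{n\times s}:\phi(A)=\phi(\tilde A)\}.$$
   Context: Data: integers $n,s,N\ge1$ and a dataset $\varpi^N=((x_1,y_1),\ldots,(x_N,y_N))$ with $x_t\in\mathbb{R}^n$, $y_t\in\mathbb{R}$. Let $\mathbb{T}=\{1,\ldots,N\}$, $\mathbb{S}=\{1,\ldots,s\}$. For $A=[a_1\ \cdots\ a_s]\in\mathbb{R}^{n\times s}$, $\sigma_A:\mathbb{T}\to\mathbb{S}$ is a switching signal satisfying $\sigma_A(t)\in\arg\min_{i\in\mathbb{S}}|y_t-x_t^\top a_i|$ for all $t$, selected uniquely by a fixed rule depending only on $A$ and the data (among all admissible choices, one maximizing $\min_{i}|I_i(A)|$, ties then broken by assigning the smallest admissible index). $I_i(A)=\{t\in\mathbb{T}:\sigma_A(t)=i\}$. Define $\phi(A)=\big(y_1-x_1^\top a_{\sigma_A(1)},\ldots,y_N-x_N^\top a_{\sigma_A(N)}\big)^\top\in\mathbb{R}^N$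 and $\mathcal{J}(A)=\|\phi(A)\|_1=\sum_{t=1}^N\min_{i\in\mathbb{S}}|y_t-a_i^\top x_t|$. For $\mathcal{T}\subset\mathbb{T}$, $\phi_{\mathcal{T}}(A)$ is the subvector of $\phi(A)$ indexed by $\mathcal{T}$. $\|w\|_0$ is the number of nonzero entries of $w$; $\mathcal{S}_r=\{w\in\mathbb{R}^N:\|w\|_0\le r\}$, and $\delta_r(A)=\inf_{w\in\mathcal{S}_r}\|\phi(A)-w\|_1$ (sum of the $N-r$ smallest absolute entries of $\phi(A)$). The $r$-th concentration ratio is $$\xi_r(\varpi^N)=\sup\Big\{\frac{\|\phi_{\mathcal{T}}(A)-\phi_{\mathcal{T}}(A')\|_1}{\|\phi(A)-\phi(A')\|_1}: A,A'\in\mathbb{R}^{n\times s},\ \mathcal{T}\subset\mathbb{T},\ \phi(A)\ne\phi(A'),\ |\mathcal{T}|\le r\Big\}.$$ *)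

(* Defs.v *)
From HB Require Import structures.
From mathcomp Require Import all_boot all_order all_algebra.
From mathcomp Require Import boolp classical_sets reals.
Set Implicit Arguments. Unset Strict Implicit. Unset Printing Implicit Defensive.
Import Order.TTheory GRing.Theory Num.Theory.
Local Open Scope ring_scope.
Local Open Scope classical_set_scope.

Section Switched.
Variables (R : realType) (n s N : nat).
Variables (x : 'I_N -> 'cV[R]_n) (y : 'I_N -> R).

(* x_t^T a_i where a_i is the i-th column of A *)
Definition xa (A : 'M[R]_(n, s)) (t : 'I_N) (i : 'I_s) : R := ((x t)^T *m A) 0 i.

Definition res (A : 'M[R]_(n, s)) (t : 'I_N) (i : 'I_s) : R := y t - xa A t i.

Definition admissible (A : 'M[R]_(n, s)) (sg : {ffun 'I_N -> 'I_s}) : bool :=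
  [forall t, forall i, `|res A t (sg t)| <= `|res A t i|].

Definition Isize (sg : {ffun 'I_N -> 'I_s}) (i : 'I_s) : nat :=
  #|[set t | sg t == i]|.

(* min_i |I_i| (the neutral element N is an upper bound of all |I_i|) *)
Definition minsize (sg : {ffun 'I_N -> 'I_s}) : nat :=
  \big[minn/N]_(i : 'I_s) Isize sg i.

Definition maxmin A (sg : {ffun 'I_N -> 'I_s}) : bool :=
  admissible A sg &&
  [forall sg' : {ffun 'I_N -> 'I_s}, admissible A sg' ==> (minsize sg' <= minsize sg)%N].

Definition lexlt (sg sg' : {ffun 'I_N -> 'I_s}) : bool :=
  [exists t : 'I_N, [forall t' : 'I_N, (t' < t)%N ==> (sg t' == sg' t')] && (sg t < sg' t)%N].

Definition best A (sg : {ffun 'I_N -> 'I_s}) : bool :=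
  maxmin A sg && [forall sg' : {ffun 'I_N -> 'I_s}, maxmin A sg' ==> (sg' == sg) || lexlt sg sg'].

(* phi(A) as a row vector in R^N (the None branch only occurs when s = 0) *)
Definition phi (A : 'M[R]_(n, s)) : 'rV[R]_N :=
  match [pick sg | best A sg] with
  | Some sg => \row_t res A t (sg t)
  | None => 0
  end.

Definition l1 (w : 'rV[R]_N) : R := \sum_t `|w 0 t|.
Definition l0 (w : 'rV[R]_N) : nat := #|[set t | w 0 t != 0]|.
Definition l1_on (T : {set 'I_N}) (w : 'rV[R]_N) : R := \sum_(t in T) `|w 0 t|.

Definition J (A : 'M[R]_(n, s)) : R := l1 (phi A).

Definition is_argminJ (Ah : 'M[R]_(n, s)) : Prop := forall A, J Ah <= J A.

Definition delta (r : nat) (A : 'M[R]_(n, s)) : R :=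
  inf [set l1 (phi A - w) | w in [set w : 'rV[R]_N | (l0 w <= r)%N]].

Definition xi (r : nat) : R :=
  sup [set q | exists (A A' : 'M[R]_(n, s)) (T : {set 'I_N}),
         [/\ phi A <> phi A', (#|T| <= r)%N &
             q = l1_on T (phi A - phi A') / l1 (phi A - phi A')]].

End Switched.

(* Main.v *)
Require Import Defs.
From HB Require Import structures.
From mathcomp Require Import all_boot all_order all_algebra.
From mathcomp Require Import boolp classical_sets reals.
From mathcomp Require Import ring lra.
Import Order.TTheory GRing.Theory Num.Theory.
Local Open Scope ring_scope.
Local Open Scope classical_set_scope.

Section Aux.
Variable (R : realType) (N : nat).

Lemma l0E (w : 'rV[R]_N) : l0 w = #|[set t | w 0 t != 0]%SET|.
Proof.
rewrite /l0; apply: eq_card => t; rewrite finset.inE.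
by apply/idP/idP; rewrite in_setE.
Qed.

Lemma l1_split (T : {set 'I_N}) (u : 'rV[R]_N) :
  l1 u = l1_on T u + l1_on (~: T) u.
Proof.
rewrite /l1 /l1_on (bigID (fun t => t \in T)) /=; congr (_ + _).
by apply: eq_bigl => t; rewrite finset.in_setC.
Qed.

Lemma l1_on_ge0 (T : {set 'I_N}) (u : 'rV[R]_N) : 0 <= l1_on T u.
Proof. by apply: sumr_ge0 => t _. Qed.

Lemma l1_on_le (T : {set 'I_N}) (u : 'rV[R]_N) : l1_on T u <= l1 u.
Proof. by rewrite (l1_split T u) lerDl l1_on_ge0. Qed.

Lemma l1_eq0 (u : 'rV[R]_N) : l1 u = 0 -> u = 0.
Proof.
move=> /eqP; rewrite psumr_eq0 // => /allP H.
apply/rowP => t; rewrite mxE; apply/eqP; rewrite -normr_eq0.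
by apply: H; rewrite mem_index_enum.
Qed.

Lemma l1_on0 (T : {set 'I_N}) : l1_on T (0 : 'rV[R]_N) = 0.
Proof. by rewrite /l1_on big1 // => t _; rewrite mxE normr0. Qed.

Lemma key (T : {set 'I_N}) (w h : 'rV[R]_N) :
  l1_on T w - l1_on T h + l1_on (~: T) h - l1_on (~: T) w <= l1 (w - h).
Proof.
rewrite (l1_split T (w - h)) /l1_on.
have H1 : \sum_(t in T) `|w 0 t| - \sum_(t in T) `|h 0 t|
          <= \sum_(t in T) `|(w - h) 0 t|.
  rewrite -sumrB; apply: ler_sum => t _; rewrite !mxE.
  by rewrite lerBlDr -[X in `|X| <= _](subrK (h 0 t)) ler_normD.
have H2 : \sum_(t in ~: T) `|h 0 t| - \sum_(t in ~: T) `|w 0 t|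
          <= \sum_(t in ~: T) `|(w - h) 0 t|.
  rewrite -sumrB; apply: ler_sum => t _; rewrite !mxE.
  by rewrite lerBlDr distrC -[X in `|X| <= _](subrK (w 0 t)) ler_normD.
lra.
Qed.

End Aux.
Arguments key {R N}. Arguments l1_split {R N}. Arguments l1_on_le {R N}.
Arguments l1_on_ge0 {R N}. Arguments l1_eq0 {R N}. Arguments l0E {R N}.

Section Main.
Variables (R : realType) (n s N : nat).
Variables (x : 'I_N -> 'cV[R]_n) (y : 'I_N -> R) (r : nat).

Lemma xi_bound (A A' : 'M[R]_(n, s)) (T : {set 'I_N}) :
  (#|T| <= r)%N ->
  l1_on T (phi x y A - phi x y A') <= xi s x y r * l1 (phi x y A - phi x y A').
Proof.
move=> hT.
have [E|NE] := eqVneq (phi x y A) (phi x y A').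
  by rewrite E subrr l1_on0 /l1 big1 ?mulr0 // => t _; rewrite mxE normr0.
set h := phi x y A - phi x y A'.
have hpos : 0 < l1 h.
  rewrite lt_def sumr_ge0 // andbT; apply/eqP => /l1_eq0 /eqP.
  by rewrite subr_eq0 (negbTE NE).
have : l1_on T h / l1 h <= xi s x y r.
  apply: ub_le_sup.
    exists 1 => q [B [B' [T' [_ _ ->]]]].
    have [E|NE'] := eqVneq (l1 (phi x y B - phi x y B')) 0.
      by rewrite E invr0 mulr0.
    have hp : 0 < l1 (phi x y B - phi x y B').
      by rewrite lt_def NE' sumr_ge0.
    by rewrite ler_pdivrMr // mul1r l1_on_le.
  by exists A, A', T; split => //; apply/eqP.
by rewrite ler_pdivrMr // mulrC.
Qed.

Lemma sparse_strict (At B : 'M[R]_(n, s)) :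
  xi s x y r < 1 / 2 -> (l0 (phi x y At) <= r)%N -> phi x y B <> phi x y At ->
  J x y At < J x y B.
Proof.
move=> hxi hl0 NE.
set w := phi x y At; set T := [set t | w 0 t != 0]%SET.
have hT : (#|T| <= r)%N by rewrite -l0E.
set h := w - phi x y B.
have hB : phi x y B = w - h by rewrite /h opprB addrC subrK.
have hxb := xi_bound At B T hT.
rewrite -/w -/h in hxb.
have hpos : 0 < l1 h.
  rewrite lt_def sumr_ge0 // andbT; apply/eqP => /l1_eq0 /eqP.
  by rewrite subr_eq0 => /eqP E; exact: NE (esym E).
have := key T w h; rewrite -hB.
have Tc : l1_on (~: T) w = 0.
  rewrite /l1_on big1 // => t; rewrite finset.in_setC finset.inE negbK => /eqP ->.
  by rewrite normr0.
have := l1_split T w; have := l1_split T h.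
rewrite /J -/w.
nra.
Qed.

End Main.

Theorem lemma3 (R : realType) (n s N : nat)
  (hn : (0 < n)%N) (hs : (0 < s)%N) (hN : (0 < N)%N)
  (x : 'I_N -> 'cV[R]_n) (y : 'I_N -> R) (r : nat) (hr : (r <= N)%N)
  (hxi : xi s x y r < 1 / 2) :
  (forall Ah : 'M[R]_(n, s), is_argminJ x y Ah ->
     forall A : 'M[R]_(n, s),
       l1 (phi x y A - phi x y Ah) <= 2 / (1 - 2 * xi s x y r) * delta x y r A) /\
  (forall At : 'M[R]_(n, s), (l0 (phi x y At) <= r)%N ->
     [set A : 'M[R]_(n, s) | is_argminJ x y A]
       = [set A : 'M[R]_(n, s) | (l0 (phi x y A) <= r)%N] /\
     [set A : 'M[R]_(n, s) | (l0 (phi x y A) <= r)%N]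
       = [set A : 'M[R]_(n, s) | phi x y A = phi x y At]).
Proof.
split.
  move=> Ah hAh A.
  set w := phi x y A; set h := w - phi x y Ah; set xi0 := xi s x y r.
  have hv : phi x y Ah = w - h by rewrite /h opprB addrC subrK.
  have hJ : l1 (w - h) <= l1 w by rewrite -hv; exact: hAh.
  have hD : (1 - 2 * xi0) * l1 h / 2 <= delta x y r A.
    apply: lb_le_inf.
      have h0 : (l0 (0 : 'rV[R]_N) <= r)%N.
        rewrite l0E (eq_card0 (A:=[set t | (0 : 'rV[R]_N) 0 t != 0]%SET)) // => t.
        by rewrite !finset.inE mxE eqxx.
      by exists (l1 (w - 0)), 0.
    move=> q [w' hw' <-]; rewrite -/w.
    set T := [set t | w' 0 t != 0]%SET.
    have hT : (#|T| <= r)%N by rewrite -l0E; exact: hw'.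
    have hxb := @xi_bound _ _ _ _ x y r A Ah T hT; rewrite -/w -/h -/xi0 in hxb.
    have hk := key T w h.
    have Tc : l1_on (~: T) w <= l1 (w - w').
      apply: le_trans (l1_on_le _ _); rewrite /l1_on; apply: ler_sum => t.
      by rewrite finset.in_setC finset.inE negbK => /eqP ht; rewrite !mxE ht subr0.
    have := l1_split T w; have := l1_split T h.
    have := l1_on_ge0 T h.
    lra.
  have hpos : 0 < 1 - 2 * xi0 by rewrite /xi0; lra.
  have -> : l1 h = 2 / (1 - 2 * xi0) * ((1 - 2 * xi0) * l1 h / 2).
    by field; rewrite gt_eqF.
  by rewrite ler_wpM2l // divr_ge0 // ltW.
move=> At hAt.
have sparse_arg : forall A : 'M[R]_(n, s), (l0 (phi x y A) <= r)%N -> is_argminJ x y A.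
  move=> A hA B.
  have [E|NE] := eqVneq (phi x y B) (phi x y A).
    by rewrite /J E.
  by apply/ltW/(@sparse_strict _ _ _ _ x y r A B hxi hA); apply/eqP.
have arg_eq : forall A : 'M[R]_(n, s), is_argminJ x y A -> phi x y A = phi x y At.
  move=> A hA; apply/eqP/negPn/negP => /eqP NE.
  have := @sparse_strict _ _ _ _ x y r _ _ hxi hAt NE.
  by rewrite ltNge hA.
split; apply/seteqP; split => A /=.
- by move=> /arg_eq ->.
- exact: sparse_arg.
- by move=> /sparse_arg /arg_eq.
- by move=> ->.
Qed.
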